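(* Let $n>m\ge 0$ be integers. Let $(\mathbf{p})(t)$ be a disk rational Bézier curve of degree $n$ with control disks $(\mathbf{p}_i)=(x_i,y_i)_{r_i}$ (centers $\mathbf{p}_i\in\mathbb{R}^2$, radii $r_i\ge 0$) and weights $\omega_i>0$, $i=0,\dots,n$, and let $(\check{\mathbf{p}})(t)$ be a disk rational Bézier curve of degree $m$ with control disks $(\check{\mathbf{p}}_j)=(\check x_j,\check y_j)_{\check r_j}$ and weights $\check\omega_j>0$, $j=0,\dots,m$. Then $(\mathbf{p})(t)=(\check{\mathbf{p}})(t)$ for all $t\in[0,1]$ (i.e. the center curves coincide and the radius functions coincide on $[0,1]$) if and only if $$\sum_{j=\max(0,i-n)}^{\min(m,i)}\frac{\binom{m}{j}\binom{n}{i-j}}{\binom{m+n}{i}}\check\omega_j\,\omega_{i-j}\,\mathbf{p}_{i-j}=\sum_{j=\max(0,i-n)}^{\min(m,i)}\frac{\binom{m}{j}\binom{n}{i-j}}{\binom{m+n}{i}}\check\omega_j\,\omega_{i-j}\,\check{\mathbf{p}}_{j},\qquad i=0,1,\dots,n+m,$$ and $$r_k=\sum_{j=\max(0,k-n+m)}^{\min(m,k)}\check r_j\binom{m}{j}\frac{\binom{n-m}{k-j}}{\binom{n}{k}},\qquad k=0,1,\dots,n.$$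
   Context: Let $B_i^n(t)=\binom{n}{i}t^i(1-t)^{n-i}$ denote the Bernstein polynomials. A disk rational Bézier curve of degree $n$ with control disks $(\mathbf{p}_i)$ having centers $\mathbf{p}_i\in\mathbb{R}^2$ and radii $r_i\ge0$, and weights $\omega_i>0$, $i=0,\dots,n$, is the family of disks $(\mathbf{p})(t)=[\mathbf{p}(t);r(t)]$, $0\le t\le 1$, with center curve $\mathbf{p}(t)=\dfrac{\sum_{i=0}^n \mathbf{p}_i\omega_iB_i^n(t)}{\sum_{i=0}^n\omega_iB_i^n(t)}$ and (polynomial, non-rational) radius function $r(t)=\sum_{i=0}^n r_iB_i^n(t)$; i.e. $(\mathbf{p})(t)$ is the closed disk of center $\mathbf{p}(t)$ and radius $r(t)$. *)

(* Defs.v *)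
From HB Require Import structures.
From mathcomp Require Import all_boot all_order all_algebra.
From mathcomp Require Import reals.
Set Implicit Arguments. Unset Strict Implicit. Unset Printing Implicit Defensive.
Import Order.TTheory GRing.Theory Num.Theory.
Local Open Scope ring_scope.

Definition bernstein {R : realType} (n i : nat) (t : R) : R :=
  'C(n, i)%:R * t ^+ i * (1 - t) ^+ (n - i).

Definition rb_center {R : realType} (n : nat) (p : nat -> 'rV[R]_2)
    (w : nat -> R) (t : R) : 'rV[R]_2 :=
  (\sum_(0 <= i < n.+1) w i * bernstein n i t)^-1 *:
    \sum_(0 <= i < n.+1) (w i * bernstein n i t) *: p i.

Definition rb_radius {R : realType} (n : nat) (r : nat -> R) (t : R) : R :=
  \sum_(0 <= i < n.+1) r i * bernstein n i t.

(* Main.v *)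
Require Import Defs.
From HB Require Import structures.
From mathcomp Require Import all_boot all_order all_algebra.
From mathcomp Require Import reals.
From mathcomp Require Import ring lra zify.
Import Order.TTheory GRing.Theory Num.Theory.
Local Open Scope ring_scope.

Section S.
Variable R : realType.

Lemma poly_indep (N : nat) (c : nat -> R) :
  \sum_(0 <= i < N.+1) c i *: ('X^i * (1 - 'X) ^+ (N - i)) = 0 :> {poly R} ->
  forall i, (i <= N)%N -> c i = 0.
Proof.
elim: N c => [|N IH] c H i hi.
  move: H; rewrite big_nat1 expr0 subnn expr0 mulr1 alg_polyC.
  by move/eqP; rewrite polyC_eq0 => /eqP; have -> : i = 0%N by lia.
move: H; rewrite big_nat_recl // expr0 mul1r subn0.
have -> : \sum_(0 <= k < N.+1) c k.+1 *: ('X^(k.+1) * (1 - 'X) ^+ (N.+1 - k.+1))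
  = 'X * \sum_(0 <= k < N.+1) c k.+1 *: ('X^k * (1 - 'X) ^+ (N - k)) :> {poly R}.
  rewrite mulr_sumr; apply: eq_bigr => k _.
  by rewrite subSS exprS -mulrA -!scalerAr.
move=> H.
have c0 : c 0%N = 0.
  have := congr1 (fun q : {poly R} => q.[0]) H.
  by rewrite /= hornerD hornerZ hornerM hornerX mul0r horner_exp hornerD hornerN hornerX hornerC subr0 expr1n mulr1 addr0 horner0.
move: H; rewrite c0 scale0r add0r => /eqP; rewrite mulf_eq0 polyX_eq0 /= => /eqP H.
case: i hi => [|i] hi //.
exact: (IH (fun k => c k.+1) H i hi).
Qed.

Lemma poly_eq0_on01 (P : {poly R}) :
  (forall t : R, 0 <= t <= 1 -> P.[t] = 0) -> P = 0.
Proof.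
move=> H; apply/eqP; apply/negPn/negP => nz.
have A : all (root P) [seq (k.+1%:R)^-1 | k <- iota 0 (size P)].
  apply/allP => x /mapP [k _ ->]; apply/rootP; apply: H.
  rewrite invr_ge0 ler0n /= invr_le1 ?ler1n ?ltr0n //.
  by rewrite unitfE pnatr_eq0.
have U : uniq [seq (k.+1%:R : R)^-1 | k <- iota 0 (size P)].
  rewrite map_inj_uniq ?iota_uniq // => a b /(congr1 (fun x : R => x^-1)).
  by rewrite !invrK => /eqP; rewrite eqr_nat eqSS => /eqP.
have := max_poly_roots nz A U.
by rewrite size_map size_iota ltnn.
Qed.

Lemma bern_indep (N : nat) (a : nat -> R) :
  (forall t : R, 0 <= t <= 1 -> \sum_(0 <= i < N.+1) a i * bernstein N i t = 0) ->
  forall i, (i <= N)%N -> a i = 0.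
Proof.
move=> H i hi.
pose P : {poly R} := \sum_(0 <= i < N.+1) (a i * 'C(N, i)%:R) *: ('X^i * (1 - 'X) ^+ (N - i)).
have P0 : P = 0.
  apply: poly_eq0_on01 => t ht; rewrite -(H t ht) /P horner_sum.
  apply: eq_bigr => k _.
  rewrite hornerZ hornerM horner_exp hornerX horner_exp hornerD hornerN hornerX hornerC /bernstein.
  by rewrite !mulrA.
have := @poly_indep N _ P0 i hi; move/eqP; rewrite mulf_eq0 pnatr_eq0 => /orP [/eqP //|].
move=> /eqP; apply: contra_eq => _; by rewrite -lt0n bin_gt0 hi.
Qed.


Lemma sum_window (V : nmodType) (G : nat -> V) a b M :
  (a <= b <= M)%N ->
  \sum_(0 <= j < M) (if (a <= j < b)%N then G j else 0) = \sum_(a <= j < b) G j.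
Proof.
move=> /andP [hab hbM].
rewrite (big_cat_nat (n := a)) ?(leq_trans hab) //= (big_cat_nat (n := b) hab hbM) /=.
rewrite big_nat_cond big1 ?add0r; last first.
  by move=> j /andP [/andP [_ hj] _]; rewrite ifF //; apply/negbTE; rewrite negb_and -ltnNge hj.
rewrite [X in _ + X]big_nat_cond [X in _ + X]big1 ?addr0; last first.
  by move=> j /andP [/andP [hj _] _]; rewrite ifF //; apply/negbTE; rewrite negb_and -leqNgt hj orbT.
by apply: eq_big_nat => j ->.
Qed.

Lemma bern_ge0 n i (t : R) : 0 <= t <= 1 -> 0 <= bernstein n i t.
Proof.
move=> /andP [h0 h1]; rewrite /bernstein.
by rewrite !mulr_ge0 ?exprn_ge0 ?ler0n // subr_ge0.
Qed.

Lemma bern_mul n m i j (t : R) : (i <= n)%N -> (j <= m)%N ->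
  bernstein m j t * bernstein n i t =
  ('C(m, j)%:R * 'C(n, i)%:R / 'C(m + n, i + j)%:R) * bernstein (n + m) (i + j) t.
Proof.
move=> hi hj; rewrite /bernstein [(n + m)%N]addnC.
have -> : (m + n - (i + j) = (m - j) + (n - i))%N by lia.
have nz : ('C(m + n, i + j)%:R : R) != 0.
  by rewrite pnatr_eq0 -lt0n bin_gt0; lia.
rewrite !exprD; field.
exact: nz.
Qed.

Lemma conv (V : lmodType R) (F : nat -> nat -> V) n m (t : R) :
  \sum_(0 <= j < m.+1) \sum_(0 <= i < n.+1) (bernstein m j t * bernstein n i t) *: F i j
  = \sum_(0 <= k < (n + m).+1) bernstein (n + m) k t *:
      \sum_(maxn 0 (k - n) <= j < (minn m k).+1)
        ('C(m, j)%:R * 'C(n, (k - j)%N)%:R / 'C(m + n, k)%:R) *: F (k - j)%N j.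
Proof.
pose X k j := (bernstein (n + m) k t * ('C(m, j)%:R * 'C(n, (k - j)%N)%:R / 'C(m + n, k)%:R)) *: F (k - j)%N j.
transitivity (\sum_(0 <= k < (n + m).+1) \sum_(0 <= j < m.+1)
   (if (maxn 0 (k - n) <= j < (minn m k).+1)%N then X k j else 0)); last first.
  apply: eq_big_nat => k /andP [_ hk].
  rewrite scaler_sumr -(@sum_window V _ (maxn 0 (k - n)) (minn m k).+1 m.+1); last by apply/andP; split; lia.
  apply: eq_bigr => j _; case: ifP => _ //.
  by rewrite /X scalerA.
rewrite [in RHS]exchange_big_nat; apply: eq_big_nat => j /andP [_ hj].
transitivity (\sum_(0 <= k < (n + m).+1) (if (j <= k < j + n.+1)%N then X k j else 0)); last first.
  apply: eq_bigr => k _.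
  have -> : ((maxn 0 (k - n) <= j) && (j < (minn m k).+1))%N = ((j <= k) && (k < j + n.+1))%N.
    by apply/idP/idP => /andP[? ?]; apply/andP; split; lia.
  by [].
rewrite sum_window; last by apply/andP; split; lia.
rewrite -[in RHS](add0n j) big_addn.
have -> : (j + n.+1 - j = n.+1)%N by lia.
apply: eq_big_nat => i /andP [_ hi].
rewrite /X addnK bern_mul; [|lia|lia].
by rewrite mulrC.
Qed.

Lemma bern_sum N (t : R) : \sum_(0 <= i < N.+1) bernstein N i t = 1.
Proof.
have := exprDn (1 - t) t N; rewrite subrK expr1n => ->.
rewrite big_mkord; apply: eq_bigr => i _.
by rewrite /bernstein -mulr_natl; ring.
Qed.

Lemma D_gt0 n (w : nat -> R) (t : R) :
  (forall i, (i <= n)%N -> 0 < w i) -> 0 <= t <= 1 ->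
  0 < \sum_(0 <= i < n.+1) w i * bernstein n i t.
Proof.
move=> hw ht.
have ge0 : forall i, (0 <= i < n.+1)%N -> 0 <= w i * bernstein n i t.
  by move=> i /andP [_ hi]; rewrite mulr_ge0 ?bern_ge0 // ltW // hw.
case/andP: (ht) => h0 h1.
have [tlt1|tge1] := ltP t 1.
  rewrite big_ltn //; apply: ltr_pwDl.
    rewrite /bernstein bin0 expr0 subn0 mulr1 mulr_gt0 ?hw //.
    by rewrite mul1r exprn_gt0 // subr_gt0.
  by rewrite big_nat_cond sumr_ge0 // => i /andP [/andP [_ hi] _]; apply: ge0; lia.
have t1 : t = 1 by apply/le_anti; rewrite h1 tge1.
subst t.
rewrite big_nat_recr //=; apply: ltr_pwDr.
  by rewrite /bernstein binn subnn expr0 mulr1 expr1n !mulr1 hw.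
by rewrite big_nat_cond sumr_ge0 // => i /andP [/andP [_ hi] _]; apply: ge0; lia.
Qed.


Lemma vec_indep N (V : nat -> 'rV[R]_2) :
  (forall t : R, 0 <= t <= 1 -> \sum_(0 <= k < N.+1) bernstein N k t *: V k = 0) ->
  forall k, (k <= N)%N -> V k = 0.
Proof.
move=> H k hk; apply/matrixP => a b; rewrite mxE.
apply: (@bern_indep N (fun k => V k a b)) => // t ht.
have := congr1 (fun M : 'rV[R]_2 => M a b) (H t ht); rewrite /= summxE mxE => e; rewrite -[X in _ = X]e.
by apply: eq_bigr => i _; rewrite mxE mulrC.
Qed.

Lemma cross (Dn Dm : R) (Nn Nm : 'rV[R]_2) : 0 < Dn -> 0 < Dm ->
  (Dn^-1 *: Nn = Dm^-1 *: Nm) <-> (Dm *: Nn - Dn *: Nm = 0).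
Proof.
move=> hn hm; have nn : Dn != 0 by rewrite gt_eqF.
have nm : Dm != 0 by rewrite gt_eqF.
split => [e|].
  apply/eqP; rewrite subr_eq0; apply/eqP.
  have := congr1 (fun v => (Dn * Dm) *: v) e; rewrite /= !scalerA.
  have -> : Dn * Dm * Dn^-1 = Dm by field.
  by have -> : Dn * Dm * Dm^-1 = Dn by field.
move/eqP; rewrite subr_eq0 => /eqP e.
have := congr1 (fun v => (Dn^-1 * Dm^-1) *: v) e; rewrite /= !scalerA.
have -> : Dn^-1 * Dm^-1 * Dm = Dn^-1 by rewrite -mulrA mulVf ?mulr1.
by have -> : Dn^-1 * Dm^-1 * Dn = Dm^-1 by rewrite mulrAC mulVf ?mul1r.
Qed.

Lemma center_expand n m (p : nat -> 'rV[R]_2) (w : nat -> R)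
    (pc : nat -> 'rV[R]_2) (wc : nat -> R) (t : R) :
  (\sum_(0 <= j < m.+1) wc j * bernstein m j t) *: (\sum_(0 <= i < n.+1) (w i * bernstein n i t) *: p i)
  - (\sum_(0 <= i < n.+1) w i * bernstein n i t) *: (\sum_(0 <= j < m.+1) (wc j * bernstein m j t) *: pc j)
  = \sum_(0 <= i < (n + m).+1) bernstein (n + m) i t *:
     (\sum_(maxn 0 (i - n)%N <= j < (minn m i).+1)
         ('C(m, j)%:R * 'C(n, (i - j)%N)%:R / 'C((m + n)%N, i)%:R * wc j * w (i - j)%N)
           *: p (i - j)%N
      - \sum_(maxn 0 (i - n)%N <= j < (minn m i).+1)
         ('C(m, j)%:R * 'C(n, (i - j)%N)%:R / 'C((m + n)%N, i)%:R * wc j * w (i - j)%N)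
           *: pc j).
Proof.
have E1 : (\sum_(0 <= j < m.+1) wc j * bernstein m j t) *: (\sum_(0 <= i < n.+1) (w i * bernstein n i t) *: p i)
  = \sum_(0 <= j < m.+1) \sum_(0 <= i < n.+1) (bernstein m j t * bernstein n i t) *: ((wc j * w i) *: p i).
  rewrite scaler_suml; apply: eq_bigr => j _; rewrite scaler_sumr; apply: eq_bigr => i _.
  by rewrite !scalerA; congr (_ *: _); ring.
have E2 : (\sum_(0 <= i < n.+1) w i * bernstein n i t) *: (\sum_(0 <= j < m.+1) (wc j * bernstein m j t) *: pc j)
  = \sum_(0 <= j < m.+1) \sum_(0 <= i < n.+1) (bernstein m j t * bernstein n i t) *: ((wc j * w i) *: pc j).
  rewrite exchange_big_nat scaler_suml; apply: eq_bigr => i _; rewrite scaler_sumr; apply: eq_bigr => j _.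
  by rewrite !scalerA; congr (_ *: _); ring.
rewrite E1 E2 !conv -sumrB; apply: eq_bigr => k _.
rewrite -scalerBr; congr (_ *: (_ - _)); apply: eq_bigr => j _; by rewrite scalerA !mulrA.
Qed.

Lemma elev n m (rc : nat -> R) (t : R) : (m <= n)%N ->
  rb_radius m rc t = \sum_(0 <= k < n.+1)
     (\sum_(maxn 0 (k + m - n)%N <= j < (minn m k).+1)
              rc j * 'C(m, j)%:R * ('C((n - m)%N, (k - j)%N)%:R / 'C(n, k)%:R)) * bernstein n k t.
Proof.
move=> hmn; rewrite /rb_radius.
transitivity (\sum_(0 <= j < m.+1) \sum_(0 <= i < (n - m).+1)
   (bernstein m j t * bernstein (n - m) i t) *: (rc j : R^o)).
  apply: eq_bigr => j _; rewrite -[LHS]mulr1 -(bern_sum (n - m) t) mulr_sumr.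
  apply: eq_bigr => i _; rewrite /GRing.scale /=; ring.
rewrite conv.
have e1 : (n - m + m = n)%N by lia.
have e2 : (m + (n - m) = n)%N by lia.
rewrite e1 e2; apply: eq_big_nat => k hk.
have e3 : (k + m - n = k - (n - m))%N by lia.
rewrite e3 mulrC; rewrite /GRing.scale /=; congr (_ * _).
apply: eq_bigr => j _; rewrite /GRing.scale /=; ring.
Qed.


End S.

Theorem mainTheorem1 (R : realType) (n m : nat) (hnm : (m < n)%N)
    (p : nat -> 'rV[R]_2) (r w : nat -> R)
    (pc : nat -> 'rV[R]_2) (rc wc : nat -> R)
    (hr : forall i, (i <= n)%N -> 0 <= r i)
    (hw : forall i, (i <= n)%N -> 0 < w i)
    (hrc : forall j, (j <= m)%N -> 0 <= rc j)
    (hwc : forall j, (j <= m)%N -> 0 < wc j) :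
  (forall t : R, 0 <= t <= 1 ->
      rb_center n p w t = rb_center m pc wc t /\
      rb_radius n r t = rb_radius m rc t)
  <->
  ((forall i, (i <= n + m)%N ->
      \sum_(maxn 0 (i - n)%N <= j < (minn m i).+1)
         ('C(m, j)%:R * 'C(n, (i - j)%N)%:R / 'C((m + n)%N, i)%:R * wc j * w (i - j)%N)
           *: p (i - j)%N
      = \sum_(maxn 0 (i - n)%N <= j < (minn m i).+1)
         ('C(m, j)%:R * 'C(n, (i - j)%N)%:R / 'C((m + n)%N, i)%:R * wc j * w (i - j)%N)
           *: pc j)
   /\
   (forall k, (k <= n)%N ->
      r k = \sum_(maxn 0 (k + m - n)%N <= j < (minn m k).+1)
              rc j * 'C(m, j)%:R * ('C((n - m)%N, (k - j)%N)%:R / 'C(n, k)%:R))).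
Proof.
have hmn : (m <= n)%N by apply: ltnW.
split.
  move=> H; split.
    move=> i hi; apply/eqP; rewrite -subr_eq0; apply/eqP; move: i hi.
    apply: vec_indep => t ht; rewrite -center_expand.
    have [hc _] := H t ht; move: hc; rewrite /rb_center.
    by move/(@cross R _ _ _ _ (@D_gt0 R n w t hw ht) (@D_gt0 R m wc t hwc ht)).
  move=> k hk; apply/eqP; rewrite -subr_eq0; apply/eqP; move: k hk.
  apply: (@bern_indep R n (fun k => r k - _)) => t ht.
  have [_ hrad] := H t ht.
  under eq_bigr do rewrite mulrBl.
  by rewrite sumrB -(@elev R n m rc t hmn) -hrad /rb_radius subrr.
move=> [HL HR] t ht; split.
  rewrite /rb_center; apply/(@cross R _ _ _ _ (@D_gt0 R n w t hw ht) (@D_gt0 R m wc t hwc ht)).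
  rewrite center_expand big_nat_cond big1 // => k /andP [/andP [_ hk] _].
  by rewrite HL ?subrr ?scaler0 //; lia.
rewrite (@elev R n m rc t hmn) /rb_radius; apply: eq_big_nat => k /andP [_ hk].
by rewrite HR //; lia.
Qed.
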